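(* Let $0<\lambda<\frac{5-\sqrt{21}}{2}$ and let $K$ be the attractor of the IFS $f_1(x)=\lambda x$, $f_2(x)=\lambda x+2\lambda$, $f_3(x)=\lambda x+3\lambda-\lambda^2$, $f_4(x)=\lambda x+1-\lambda$. Then every $x\in K$ either has exactly $2^k$ codings for some integer $k\ge0$, or has uncountably many codings.
   Context: A coding of $x\in K$ is a sequence $(i_n)\in\{1,2,3,4\}^{\mathbb{N}}$ with $x=\lim_{n\to\infty}f_{i_1}\circ\cdots\circ f_{i_n}(0)$. *)

(* Defs.v *)
From Stdlib Require Import Reals List Rtopology.
Open Scope R_scope.

Inductive digit : Type := d1 | d2 | d3 | d4.

Definition f (lam : R) (i : digit) (x : R) : R :=
  match i with
  | d1 => lam * x
  | d2 => lam * x + 2 * lam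
  | d3 => lam * x + 3 * lam - lam ^ 2
  | d4 => lam * x + 1 - lam
  end.

(* comp lam s n y = f_{s 0} o f_{s 1} o ... o f_{s (n-1)} (y)
   (the paper's i_1, i_2, ... are s 0, s 1, ...) *)
Fixpoint comp (lam : R) (s : nat -> digit) (n : nat) (y : R) : R :=
  match n with
  | O => y
  | S m => comp lam s m (f lam (s m) y)
  end.

Definition coding (lam : R) (s : nat -> digit) (x : R) : Prop :=
  Un_cv (fun n => comp lam s n 0) x.

Definition is_attractor (lam : R) (K : R -> Prop) : Prop :=
  compact K /\ (exists x, K x) /\
  (forall x, K x <-> exists (i : digit) (y : R), K y /\ x = f lam i y).

Definition has_card (A : (nat -> digit) -> Prop) (n : nat) : Prop :=
  exists l : list (nat -> digit),
    length l = n /\ NoDup l /\ forall s, A s <-> In s l.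

Definition countable_set (A : (nat -> digit) -> Prop) : Prop :=
  exists g : (nat -> digit) -> nat,
    forall s t, A s -> A t -> g s = g t -> s = t.

(* Main.v *)
Require Import Defs.
From Stdlib Require Import Reals List Rtopology Lra Psatz FunctionalExtensionality ClassicalEpsilon Classical Wf_nat Lia.
Import Defs.
Open Scope R_scope.

Definition good (lam : R) := 0 < lam /\ lam < 1/4 /\ lam*lam - 5*lam + 1 > 0.

Definition tau (lam : R) (d : digit) := Defs.f lam d 0.

Lemma f_eq (lam : R) (d : digit) (y : R) : Defs.f lam d y = lam*y + tau lam d.
Proof. destruct d; unfold tau; simpl; ring. Qed.

Definition isblk (a b : digit) : bool :=
  match a, b with d2, d4 => true | d3, d1 => true | _, _ => false end.
Definition sw (a : digit) : digit :=
  match a with d1 => d4 | d4 => d1 | d2 => d3 | d3 => d2 end.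

Lemma decomp_core (lam : R) (G : good lam) (a b c d : digit) (x : R) :
  tau lam a + lam * tau lam b <= x <= tau lam a + lam * tau lam b + lam*lam ->
  tau lam c + lam * tau lam d <= x <= tau lam c + lam * tau lam d + lam*lam ->
  tau lam a <= x <= tau lam a + lam ->
  tau lam c <= x <= tau lam c + lam ->
  c = a \/ (isblk a b = true /\ c = sw a /\ d = sw b).
Proof.
  destruct G as [G1 [G2 G3]].
  assert (lam*lam < lam/4) by nra.
  assert (lam*lam*lam < lam*lam/4) by nra.
  intros; destruct a, b, c, d; unfold tau in *; simpl in *;
  first [left; reflexivity | right; repeat split; reflexivity | exfalso; lra | exfalso; nra].
Qed.

Definition shift (s : nat -> digit) : nat -> digit := fun n => s (S n).
Definition scons (a : digit) (s : nat -> digit) : nat -> digit :=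
  fun n => match n with O => a | S m => s m end.

Lemma tau_bnd (lam : R) (G : good lam) d : 0 <= tau lam d <= 1 - lam.
Proof. destruct G as [G1 [G2 G3]]. destruct d; unfold tau; simpl; nra. Qed.

Lemma comp_aff (lam : R) s n : forall y, comp lam s n y = comp lam s n 0 + lam^n * y.
Proof.
  induction n as [|n IH]; intro y; simpl. ring.
  rewrite (IH (Defs.f lam (s n) y)), (IH (Defs.f lam (s n) 0)), !f_eq. ring.
Qed.

Lemma comp_S0 (lam : R) s n : comp lam s (S n) 0 = comp lam s n 0 + lam^n * tau lam (s n).
Proof. simpl. rewrite comp_aff, f_eq. ring. Qed.

Lemma comp_shift (lam : R) s n : forall y, comp lam s (S n) y = Defs.f lam (s 0%nat) (comp lam (shift s) n y).
Proof.
  induction n as [|n IH]; intro y. reflexivity.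
  change (comp lam s (S (S n)) y) with (comp lam s (S n) (Defs.f lam (s (S n)) y)).
  rewrite IH. reflexivity.
Qed.

Lemma comp_ext (lam : R) s t n y : (forall i, s i = t i) -> comp lam s n y = comp lam t n y.
Proof.
  intro H. revert y; induction n as [|n IH]; intro y; simpl. reflexivity.
  rewrite H. apply IH.
Qed.

Lemma comp_bnd (lam : R) (G : good lam) s n : 0 <= comp lam s n 0 <= 1 - lam^n.
Proof.
  induction n as [|n IH]. simpl; lra.
  rewrite comp_S0. pose proof (tau_bnd lam G (s n)). destruct G as [G1 _].
  assert (0 < lam^n) by (apply pow_lt; lra). simpl. nra.
Qed.

Definition level (lam : R) n s x := comp lam s n 0 <= x <= comp lam s n 0 + lam^n.
Definition II (lam : R) s x := forall n, level lam n s x.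

Lemma level_ext (lam : R) n s t x : (forall i, s i = t i) -> level lam n s x -> level lam n t x.
Proof. intros H; unfold level; rewrite (comp_ext lam s t n 0 H); auto. Qed.

Lemma level_mono (lam : R) (G : good lam) n s x : level lam (S n) s x -> level lam n s x.
Proof.
  unfold level; rewrite comp_S0. pose proof (tau_bnd lam G (s n)). destruct G as [G1 _].
  assert (0 < lam^n) by (apply pow_lt; lra). simpl. nra.
Qed.

Lemma level_shift (lam : R) (G : good lam) m s x :
  level lam (S m) s x <-> level lam m (shift s) ((x - tau lam (s 0%nat)) / lam).
Proof.
  unfold level. rewrite comp_shift, f_eq. destruct G as [G1 _].
  set (y := (x - tau lam (s 0%nat)) / lam).
  assert (x = lam * y + tau lam (s 0%nat)) by (unfold y; field; lra).
  rewrite H. simpl. set (B := comp lam (shift s) m 0). set (P := lam^m).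
  split; intros [H1 H2]; split; nra.
Qed.

Lemma II_shift (lam : R) (G : good lam) s x :
  II lam s x <-> II lam (shift s) ((x - tau lam (s 0%nat)) / lam).
Proof.
  split; intros H n.
  - apply level_shift; auto.
  - destruct n as [|n].
    + apply level_mono; auto. apply level_shift; auto.
    + apply level_shift; auto.
Qed.

Lemma II_scons (lam : R) (G : good lam) a s x :
  II lam (scons a s) x <-> II lam s ((x - tau lam a) / lam).
Proof. apply (II_shift lam G (scons a s) x). Qed.

Lemma II_sh (lam : R) (G : good lam) s x : II lam s x -> II lam (shift s) ((x - tau lam (s 0%nat)) / lam).
Proof. apply (proj1 (II_shift lam G s x)). Qed.
Lemma II_sc (lam : R) (G : good lam) a s x : II lam s ((x - tau lam a) / lam) -> II lam (scons a s) x.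
Proof. apply (proj2 (II_scons lam G a s x)). Qed.

Lemma comp_add (lam : R) s n k : forall y,
  comp lam s (n + k) y = comp lam s n (comp lam (fun i => s (n + i)%nat) k y).
Proof.
  induction k as [|k IH]; intro y.
  - rewrite Nat.add_0_r. reflexivity.
  - rewrite Nat.add_succ_r. simpl. rewrite IH. reflexivity.
Qed.

Lemma lim_bnd (u : nat -> R) x n a b : Un_cv u x ->
  (forall m, (n <= m)%nat -> a <= u m <= b) -> a <= x <= b.
Proof.
  intros Hc Hb. split.
  - destruct (Rle_or_lt a x) as [h|h]; auto. exfalso.
    destruct (Hc (a - x)) as [N HN]; [lra|].
    specialize (HN (max N n) (Nat.le_max_l _ _)). specialize (Hb (max N n) (Nat.le_max_r _ _)).
    unfold R_dist in HN. apply Rabs_def2 in HN. lra.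
  - destruct (Rle_or_lt x b) as [h|h]; auto. exfalso.
    destruct (Hc (x - b)) as [N HN]; [lra|].
    specialize (HN (max N n) (Nat.le_max_l _ _)). specialize (Hb (max N n) (Nat.le_max_r _ _)).
    unfold R_dist in HN. apply Rabs_def2 in HN. lra.
Qed.

Lemma coding_II (lam : R) (G : good lam) s x : coding lam s x -> II lam s x.
Proof.
  intros Hc n. unfold level. apply (lim_bnd _ x n _ _ Hc).
  intros m Hm. replace m with (n + (m - n))%nat by lia.
  rewrite comp_add, (comp_aff lam s n (comp _ _ _ _)).
  pose proof (comp_bnd lam G (fun i => s (n+i)%nat) (m - n)).
  destruct G as [G1 _].
  assert (0 < lam^n) by (apply pow_lt; lra).
  assert (0 < lam^(m-n)) by (apply pow_lt; lra). split; nra.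
Qed.

Lemma bound_coding (lam : R) (G : good lam) s x B :
  (forall n, Rabs (comp lam s n 0 - x) <= lam^n * B) -> coding lam s x.
Proof.
  intros H eps He. destruct G as [G1 [G2 _]].
  assert (0 <= B) by (specialize (H O); simpl in H; pose proof (Rabs_pos (0 - x)); lra).
  destruct (pow_lt_1_zero lam) with (y := eps / (B + 1)) as [N HN].
  - rewrite Rabs_right; lra.
  - apply Rdiv_lt_0_compat; lra.
  - exists N. intros n Hn. unfold R_dist. specialize (HN n Hn). specialize (H n).
    rewrite Rabs_right in HN by (apply Rle_ge, pow_le; lra).
    assert (lam^n * (B+1) < eps).
    { apply (Rmult_lt_compat_r (B+1)) in HN; [|lra].
      unfold Rdiv in HN. rewrite Rmult_assoc, Rinv_l in HN by lra. lra. }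
    assert (0 <= lam^n) by (apply pow_le; lra). nra.
Qed.

Lemma II_coding (lam : R) (G : good lam) s x : II lam s x -> coding lam s x.
Proof.
  intro H. apply (bound_coding lam G s x 1). intro n.
  destruct (H n) as [H1 H2]. rewrite Rabs_left1; lra.
Qed.

Lemma comp1 (lam : R) s : comp lam s 1 0 = tau lam (s 0%nat).
Proof. simpl. rewrite f_eq. ring. Qed.
Lemma comp2 (lam : R) s : comp lam s 2 0 = tau lam (s 0%nat) + lam * tau lam (s 1%nat).
Proof. simpl. rewrite !f_eq. ring. Qed.

Lemma decomp (lam : R) (G : good lam) s t x : II lam s x -> II lam t x ->
  t 0%nat = s 0%nat \/ (isblk (s 0%nat) (s 1%nat) = true /\ t 0%nat = sw (s 0%nat) /\ t 1%nat = sw (s 1%nat)).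
Proof.
  intros Hs Ht.
  pose proof (Hs 1%nat) as A1. pose proof (Hs 2%nat) as A2.
  pose proof (Ht 1%nat) as B1. pose proof (Ht 2%nat) as B2.
  unfold level in *. rewrite comp1 in A1, B1. rewrite comp2 in A2, B2. simpl in *.
  apply (decomp_core lam G _ _ _ _ x); nra.
Qed.

Lemma zeq (lam : R) (G : good lam) a b x : isblk a b = true ->
  ((x - tau lam (sw a))/lam - tau lam (sw b))/lam = ((x - tau lam a)/lam - tau lam b)/lam.
Proof.
  destruct G as [G1 _].
  destruct a, b; simpl; intro H; try discriminate; unfold tau; simpl; field; lra.
Qed.

Definition Bb (s : nat -> digit) i := isblk (s i) (s (S i)).

Lemma uniq_nb (lam : R) (G : good lam) n : forall s t x,
  (forall i, Bb s i = false) -> II lam s x -> II lam t x -> t n = s n.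
Proof.
  induction n as [|n IH]; intros s t x Hb Hs Ht;
  (destruct (decomp lam G s t x Hs Ht) as [E|[E _]]; [|pose proof (Hb 0%nat) as H0; unfold Bb in H0; rewrite H0 in E; discriminate]).
  - exact E.
  - apply (IH (shift s) (shift t) ((x - tau lam (s 0%nat)) / lam)).
    + intro i. exact (Hb (S i)).
    + apply II_sh; auto.
    + rewrite <- E. apply II_sh; auto.
Qed.

Lemma eta1 (t : nat -> digit) : t = scons (t 0%nat) (shift t).
Proof. apply functional_extensionality. intros [|n]; reflexivity. Qed.

Lemma scons_inj a s s' : scons a s = scons a s' -> s = s'.
Proof. intro H. apply functional_extensionality. intro n. exact (f_equal (fun u => u (S n)) H). Qed.

Lemma nodup_map_inj {A B} (g : A -> B) (l : list A) :
  (forall x y, g x = g y -> x = y) -> NoDup l -> NoDup (map g l).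
Proof. intros Hi Hn. apply NoDup_map_NoDup_ForallPairs; auto. intros x y _ _. apply Hi. Qed.

Lemma sw_neq a : sw a <> a.
Proof. destruct a; discriminate. Qed.

Lemma blk_sw a b : isblk a b = true -> isblk (sw a) (sw b) = true.
Proof. destruct a, b; simpl; auto. Qed.

Lemma blk_excl a b c : isblk a b = true -> isblk b c = false.
Proof. destruct a, b, c; simpl; auto. Qed.

Lemma count_fin (lam : R) (G : good lam) N : forall s x,
  II lam s x -> (forall i, (N <= i)%nat -> Bb s i = false) ->
  exists k, has_card (fun t => II lam t x) (2 ^ k).
Proof.
  induction N as [N IH] using lt_wf_ind. intros s x Hs Hb.
  destruct N as [|N'].
  - exists O. exists (s :: nil). simpl. split; [reflexivity|]. split.
    + constructor; [simpl; tauto| constructor].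
    + intro t. split.
      * intro Ht. left. apply functional_extensionality. intro n.
        symmetry. apply (uniq_nb lam G n s t x); auto. intro i; apply Hb; lia.
      * intros [E|[]]. subst. exact Hs.
  - destruct (Bb s 0%nat) eqn:B0.
    +
      set (z := ((x - tau lam (s 0%nat))/lam - tau lam (s 1%nat))/lam).
      assert (Hz : II lam (shift (shift s)) z) by (do 2 apply (II_sh lam G) in Hs; exact Hs).
      destruct (IH N' ltac:(lia) (shift (shift s)) z Hz) as [k [l [Hl [Hnd Hm]]]].
      { intros i Hi. apply Hb. lia. }
      exists (S k).
      set (a := s 0%nat). set (b := s 1%nat).
      exists (map (fun u => scons a (scons b u)) l ++ map (fun u => scons (sw a) (scons (sw b) u)) l).
      split; [rewrite length_app, !length_map, Hl; simpl; lia|]. split.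
      * apply NoDup_app.
        -- apply nodup_map_inj; auto. intros u v E. apply scons_inj, scons_inj in E. exact E.
        -- apply nodup_map_inj; auto. intros u v E. apply scons_inj, scons_inj in E. exact E.
        -- intros w H1 H2. apply in_map_iff in H1. apply in_map_iff in H2.
           destruct H1 as [u [E1 _]]. destruct H2 as [v [E2 _]]. subst w.
           apply (sw_neq a). exact (f_equal (fun u => u 0%nat) E2).
      * intro t. rewrite in_app_iff, !in_map_iff. split.
        -- intro Ht. destruct (decomp lam G s t x Hs Ht) as [E|[_ [E0 E1]]].
           ++
              assert (Ht1 : II lam (shift t) ((x - tau lam (s 0%nat))/lam)) by (rewrite <- E; apply II_sh; auto).
              assert (Hs1 : II lam (shift s) ((x - tau lam (s 0%nat))/lam)) by (apply II_sh; auto).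
              destruct (decomp lam G _ _ _ Hs1 Ht1) as [E'|[E' _]].
              ** left. exists (shift (shift t)). split.
                 --- apply functional_extensionality; intros [|[|n]]; [symmetry; exact E | symmetry; exact E' | reflexivity].
                 --- apply Hm. apply (II_sh lam G) in Ht1. rewrite E' in Ht1. exact Ht1.
              ** exfalso. unfold Bb in B0. unfold shift in E'. simpl in E'.
                 rewrite (blk_excl _ _ _ B0) in E'. discriminate.
           ++ right. exists (shift (shift t)). split.
              ** apply functional_extensionality; intros [|[|n]]; [symmetry; exact E0 | symmetry; exact E1 | reflexivity].
              ** apply Hm. apply (II_sh lam G) in Ht. apply (II_sh lam G) in Ht.
                 change (shift t 0%nat) with (t 1%nat) in Ht. rewrite E0, E1 in Ht. unfold z.
                 rewrite <- (zeq lam G (s 0%nat) (s 1%nat) x B0). exact Ht.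
        -- intros [[u [E Hu]]|[u [E Hu]]]; subst t; apply Hm in Hu.
           ++ apply II_sc; auto. apply II_sc; auto.
           ++ apply II_sc; auto. apply II_sc; auto. unfold z in Hu.
              rewrite <- (zeq lam G (s 0%nat) (s 1%nat) x B0) in Hu. exact Hu.
    +
      set (y := (x - tau lam (s 0%nat))/lam).
      assert (Hy : II lam (shift s) y) by (apply (II_sh lam G) in Hs; exact Hs).
      destruct (IH N' ltac:(lia) (shift s) y Hy) as [k [l [Hl [Hnd Hm]]]].
      { intros i Hi. apply Hb. lia. }
      exists k. exists (map (scons (s 0%nat)) l).
      split; [rewrite length_map; auto|]. split.
      * apply nodup_map_inj; auto. apply scons_inj.
      * intro t. rewrite in_map_iff. split.
        -- intro Ht. destruct (decomp lam G s t x Hs Ht) as [E|[E _]].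
           ++ exists (shift t). split.
              ** apply functional_extensionality; intros [|n]; [symmetry; exact E | reflexivity].
              ** apply Hm. apply (II_sh lam G) in Ht. rewrite E in Ht. exact Ht.
           ++ unfold Bb in B0. rewrite B0 in E. discriminate.
        -- intros [u [E Hu]]. subst t. apply II_sc; auto. apply Hm; exact Hu.
Qed.

Definition flip (s : nat -> digit) (c : nat -> bool) (i : nat) : bool :=
  (Bb s i && c i) || match i with O => false | S j => Bb s j && c j end.
Definition Phi s c i := if flip s c i then sw (s i) else s i.

Lemma Phi_level (lam : R) (G : good lam) n : forall s c x, II lam s x -> level lam n (Phi s c) x.
Proof.
  induction n as [n IH] using (well_founded_induction lt_wf). intros s c x Hs.
  destruct n as [|m]. { exact (Hs O). }
  destruct (Bb s 0%nat) eqn:B0.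
  - apply level_mono; auto.
    assert (B1 : Bb s 1%nat = false) by (unfold Bb in *; apply (blk_excl _ _ _ B0)).
    set (z := ((x - tau lam (s 0%nat))/lam - tau lam (s 1%nat))/lam).
    assert (Hz : II lam (shift (shift s)) z) by (do 2 apply (II_sh lam G) in Hs; exact Hs).
    assert (Hl : level lam m (Phi (shift (shift s)) (fun i => c (S (S i)))) z) by (apply IH; auto).
    apply (proj2 (level_shift lam G _ _ _)). apply (proj2 (level_shift lam G _ _ _)).
    assert (T0 : Phi s c 0%nat = if c 0%nat then sw (s 0%nat) else s 0%nat).
    { unfold Phi, flip. rewrite B0. simpl. destruct (c 0%nat); reflexivity. }
    assert (T1 : Phi s c 1%nat = if c 0%nat then sw (s 1%nat) else s 1%nat).
    { unfold Phi, flip. rewrite B0, B1. simpl. destruct (c 0%nat); reflexivity. }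
    change (shift (Phi s c) 0%nat) with (Phi s c 1%nat). rewrite T0, T1.
    replace (((x - tau lam (if c 0%nat then sw (s 0%nat) else s 0%nat)) / lam -
       tau lam (if c 0%nat then sw (s 1%nat) else s 1%nat)) / lam) with z.
    2:{ unfold z. destruct (c 0%nat); [|reflexivity]. symmetry. apply zeq; auto. }
    refine (level_ext lam m _ _ z _ Hl).
    intro i. unfold shift, Phi, flip. destruct i as [|i].
    + rewrite B1. simpl. reflexivity.
    + reflexivity.
  - apply (proj2 (level_shift lam G _ _ _)).
    assert (T0 : Phi s c 0%nat = s 0%nat).
    { unfold Phi, flip. rewrite B0. simpl. destruct (c 0%nat); reflexivity. }
    rewrite T0.
    apply (level_ext lam m (Phi (shift s) (fun i => c (S i)))).
    + intro i. unfold shift, Phi, flip. destruct i as [|i].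
      * rewrite B0. simpl. reflexivity.
      * reflexivity.
    + apply IH; [lia|]. apply II_sh; auto.
Qed.

Lemma Phi_II (lam : R) (G : good lam) s c x : II lam s x -> II lam (Phi s c) x.
Proof. intros H n. apply Phi_level; auto. Qed.

Fixpoint pp (nx : nat -> nat) n := match n with O => nx O | S k => nx (S (pp nx k)) end.

Lemma pp_mono nx : (forall N, (N <= nx N)%nat) -> forall n m, (n < m)%nat -> (pp nx n < pp nx m)%nat.
Proof.
  intros Hn n m Hm. induction m as [|m IH]; [lia|].
  simpl. assert (S (pp nx m) <= nx (S (pp nx m)))%nat by apply Hn.
  destruct (Nat.eq_dec n m) as [->|ne]; [lia|]. assert (n < m)%nat by lia. specialize (IH H0). lia.
Qed.

Lemma pp_inj nx : (forall N, (N <= nx N)%nat) -> forall n m, pp nx n = pp nx m -> n = m.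
Proof.
  intros Hn n m E. destruct (Nat.lt_trichotomy n m) as [h|[h|h]]; auto;
  apply (pp_mono nx Hn) in h; lia.
Qed.

Definition deqb (a b : digit) : bool :=
  match a, b with d1, d1 | d2, d2 | d3, d3 | d4, d4 => true | _, _ => false end.

Lemma deq_lem a b : a <> (if deqb a b then sw b else b).
Proof. destruct a, b; simpl; discriminate. Qed.

Lemma uncount (lam : R) (G : good lam) s x : II lam s x ->
  (forall N, exists i, (N <= i)%nat /\ Bb s i = true) ->
  ~ countable_set (fun t => coding lam t x).
Proof.
  intros Hs Hinf [g Hg].
  pose (nx := fun N => proj1_sig (constructive_indefinite_description _ (Hinf N))).
  assert (Hnx : forall N, (N <= nx N)%nat /\ Bb s (nx N) = true).
  { intro N. unfold nx. destruct (constructive_indefinite_description _ (Hinf N)) as [i Hi]. exact Hi. }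
  assert (Hnx1 : forall N, (N <= nx N)%nat) by (intro N; apply Hnx).
  assert (Hpb : forall n, Bb s (pp nx n) = true) by (intros [|n]; apply Hnx).
  pose (h := fun n => match excluded_middle_informative (exists t, coding lam t x /\ g t = n) with
                      | left H => proj1_sig (constructive_indefinite_description _ H)
                      | right _ => s end).
  pose (c := fun j => match excluded_middle_informative (exists n, pp nx n = j) with
                      | left H => deqb (h (proj1_sig (constructive_indefinite_description _ H)) j) (s j)
                      | right _ => false end).
  assert (Hc : forall m, c (pp nx m) = deqb (h m (pp nx m)) (s (pp nx m))).
  { intro m. unfold c. destruct (excluded_middle_informative _) as [H|H].
    - destruct (constructive_indefinite_description _ H) as [n' Hn']. simpl.
      apply (pp_inj nx Hnx1) in Hn'. subst n'. reflexivity.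
    - exfalso. apply H. exists m. reflexivity. }
  set (ts := Phi s c).
  assert (Hts : coding lam ts x) by (apply II_coding; auto; apply Phi_II; auto).
  set (m := g ts).
  assert (Hh : h m = ts).
  { unfold h. destruct (excluded_middle_informative _) as [H|H].
    - destruct (constructive_indefinite_description _ H) as [t' [Ht' Hg']]. simpl.
      apply Hg; auto.
    - exfalso. apply H. exists ts. split; auto. }
  assert (Hfl : flip s c (pp nx m) = c (pp nx m)).
  { unfold flip. rewrite Hpb. destruct (pp nx m) as [|j] eqn:Ej.
    - simpl. destruct (c 0%nat); reflexivity.
    - destruct (Bb s j) eqn:Bj.
      + exfalso. pose proof (Hpb m) as Hm. rewrite Ej in Hm. unfold Bb in Bj, Hm.
        rewrite (blk_excl _ _ _ Bj) in Hm. discriminate.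
      + simpl. destruct (c (S j)); reflexivity. }
  apply (deq_lem (h m (pp nx m)) (s (pp nx m))).
  rewrite <- Hc, <- Hfl. rewrite Hh. reflexivity.
Qed.

Lemma good_of (lam : R) : 0 < lam -> lam < (5 - sqrt 21) / 2 -> good lam.
Proof.
  intros H0 H1.
  pose proof (sqrt_sqrt 21 ltac:(lra)) as Q. pose proof (sqrt_pos 21) as Q0.
  set (q := sqrt 21) in *.
  assert (q > 4.5) by nra.
  split; [lra|]. split; [lra|].
  assert (0 < (5 - q)/2 - lam) by lra. assert (0 < (5 + q)/2 - lam) by lra.
  assert (0 < ((5 - q)/2 - lam) * ((5 + q)/2 - lam)) by (apply Rmult_lt_0_compat; lra).
  nra.
Qed.

Lemma has_card_iff (P Q : (nat -> digit) -> Prop) n :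
  (forall s, P s <-> Q s) -> has_card P n -> has_card Q n.
Proof.
  intros H [l [H1 [H2 H3]]]. exists l. split; auto. split; auto.
  intro s. rewrite <- H. apply H3.
Qed.

Lemma exists_coding (lam : R) (G : good lam) (K : R -> Prop) :
  is_attractor lam K -> forall x, K x -> exists s, coding lam s x.
Proof.
  intros [Hc [_ Hinv]] x Hx.
  destruct (compact_P1 K Hc) as [m [M HmM]].
  assert (Hst : forall z : {x | K x}, exists p : digit * {y | K y},
            proj1_sig z = Defs.f lam (fst p) (proj1_sig (snd p))).
  { intros [z Hz]. destruct (proj1 (Hinv z) Hz) as [i [y [Hy E]]].
    exists (i, exist _ y Hy). simpl. exact E. }
  pose (st := fun z => proj1_sig (constructive_indefinite_description _ (Hst z))).
  assert (Hst2 : forall z, proj1_sig z = Defs.f lam (fst (st z)) (proj1_sig (snd (st z)))).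
  { intro z. unfold st. destruct (constructive_indefinite_description _ (Hst z)) as [p Hp]. exact Hp. }
  pose (zz := fix zz n := match n with O => exist _ x Hx | S k => snd (st (zz k)) end).
  exists (fun n => fst (st (zz n))).
  assert (Hcomp : forall n, comp lam (fun n => fst (st (zz n))) n (proj1_sig (zz n)) = x).
  { induction n as [|n IH]. reflexivity.
    simpl. rewrite <- Hst2. exact IH. }
  apply (bound_coding lam G _ x (Rabs m + Rabs M)). intro n.
  specialize (Hcomp n). rewrite comp_aff in Hcomp.
  pose proof (HmM _ (proj2_sig (zz n))) as Hb.
  set (y := proj1_sig (zz n)) in *.
  destruct G as [G1 _]. assert (0 < lam^n) by (apply pow_lt; lra).
  replace (comp lam (fun n0 => fst (st (zz n0))) n 0 - x) with (- (lam^n * y)) by lra.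
  rewrite Rabs_Ropp, Rabs_mult, (Rabs_right (lam^n)) by lra.
  apply Rmult_le_compat_l; [lra|].
  unfold Rabs; repeat destruct Rcase_abs; lra.
Qed.

Theorem corollary2p24 (lam : R) (K : R -> Prop)
  (Hlam0 : 0 < lam) (Hlam1 : lam < (5 - sqrt 21) / 2)
  (HK : is_attractor lam K) :
  forall x, K x ->
    (exists k : nat, has_card (fun s => coding lam s x) (2 ^ k)%nat)
    \/ ~ countable_set (fun s => coding lam s x).
Proof.
  intros x Hx. pose proof (good_of lam Hlam0 Hlam1) as G.
  destruct (exists_coding lam G K HK x Hx) as [s Hs].
  apply (coding_II lam G) in Hs.
  destruct (classic (exists N, forall i, (N <= i)%nat -> Bb s i = false)) as [[N HN]|Hn].
  - left. destruct (count_fin lam G N s x Hs HN) as [k Hk]. exists k.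
    apply (has_card_iff (fun t => II lam t x)); auto.
    intro t; split; [apply II_coding; auto | apply coding_II; auto].
  - right. apply (uncount lam G s x Hs).
    intro N. apply NNPP. intro H. apply Hn. exists N. intros i Hi.
    destruct (Bb s i) eqn:E; auto. exfalso. apply H. exists i. auto.
Qed.
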